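(* Let $\tilde{N}$, $N_1$, $N_2$ be real symmetric $n\times n$ matrices with spectral norm at most $1$, and suppose that $N_1$ is positive semidefinite and commutes with $N_2$. If $I-\tilde{N}\approx_{\epsilon}I-N_1$ (with $\epsilon\ge 0$), then \[ I-\tfrac{1}{2}(\tilde{N}N_2+N_2\tilde{N})\approx_{\epsilon}I-N_2N_1. \]
   Context: For real symmetric $X,Y$ and $\epsilon\ge0$, $X\approx_\epsilon Y$ means $(1-\epsilon)v^TYv\le v^TXv\le(1+\epsilon)v^TYv$ for all $v\in\mathbb{R}^n$. *)

(* Defs.v *)
From HB Require Import structures.
From mathcomp Require Import all_boot all_order all_algebra.
Set Implicit Arguments. Unset Strict Implicit. Unset Printing Implicit Defensive.
Import Order.TTheory GRing.Theory Num.Theory.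
Local Open Scope ring_scope.

Definition qform (R : rcfType) (n : nat) (X : 'M[R]_n) (v : 'cV[R]_n) : R :=
  (v^T *m X *m v) 0 0.

Definition is_symm (R : rcfType) (n : nat) (X : 'M[R]_n) : Prop := X^T = X.

(* spectral (operator 2-) norm at most 1:  ||X v||_2 <= ||v||_2 for all v,
   stated with squared Euclidean norms *)
Definition spec_norm_le1 (R : rcfType) (n : nat) (X : 'M[R]_n) : Prop :=
  forall v : 'cV[R]_n, ((X *m v)^T *m (X *m v)) 0 0 <= (v^T *m v) 0 0.

Definition psd (R : rcfType) (n : nat) (X : 'M[R]_n) : Prop :=
  forall v : 'cV[R]_n, 0 <= qform X v.

Definition approx_eps (R : rcfType) (n : nat) (eps : R) (X Y : 'M[R]_n) : Prop :=
  forall v : 'cV[R]_n,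
    (1 - eps) * qform Y v <= qform X v /\ qform X v <= (1 + eps) * qform Y v.

(* Main.v *)
Require Import Defs.
From HB Require Import structures.
From mathcomp Require Import all_boot all_order all_algebra.
From mathcomp Require Import ring lra.
Import Order.TTheory GRing.Theory Num.Theory.
Local Open Scope ring_scope.

Section Aux.
Context {R : rcfType} {n : nat}.
Implicit Types (x y z : 'cV[R]_n) (X : 'M[R]_n).

Definition dot x y := (x^T *m y) 0 0.

Lemma dotC x y : dot x y = dot y x.
Proof. by rewrite /dot -[y^T *m x]trmxK trmx_mul trmxK [in RHS]mxE. Qed.

Lemma dotDl x y z : dot (x + y) z = dot x z + dot y z.
Proof. by rewrite /dot raddfD /= mulmxDl mxE. Qed.

Lemma dotBl x y z : dot (x - y) z = dot x z - dot y z.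
Proof. by rewrite /dot raddfB /= mulmxDl mulNmx !mxE. Qed.

Lemma dotDr x y z : dot z (x + y) = dot z x + dot z y.
Proof. by rewrite /dot mulmxDr mxE. Qed.

Lemma dotBr x y z : dot z (x - y) = dot z x - dot z y.
Proof. by rewrite /dot mulmxBr !mxE. Qed.

Lemma dotNl x y : dot (- x) y = - dot x y.
Proof. by rewrite /dot raddfN /= mulNmx mxE. Qed.

Lemma dotNr x y : dot x (- y) = - dot x y.
Proof. by rewrite /dot mulmxN mxE. Qed.

Lemma dotZr (a : R) x y : dot x (a *: y) = a * dot x y.
Proof. by rewrite /dot -scalemxAr mxE. Qed.

Lemma dotM X x y : X^T = X -> dot x (X *m y) = dot (X *m x) y.
Proof. by move=> hX; rewrite /dot trmx_mul hX mulmxA. Qed.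

Lemma qformE X v : qform X v = dot v (X *m v).
Proof. by rewrite /qform /dot mulmxA. Qed.

Lemma qform1B X v : qform (1%:M - X) v = dot v v - qform X v.
Proof. by rewrite /qform /dot mulmxBr mulmxBl mulmx1 !mxE. Qed.

Lemma polar X v y : X^T = X ->
  4 * dot v (X *m y) = dot (v + y) (X *m (v + y)) - dot (v - y) (X *m (v - y)).
Proof.
move=> hX.
rewrite !mulmxDr !mulmxN !dotDl !dotDr !dotNl !dotNr.
rewrite (dotM _ y v hX) (dotC (X *m y) v).
ring.
Qed.
End Aux.

Theorem mainTheorem8 (R : rcfType) (n : nat) (eps : R) (Nt N1 N2 : 'M[R]_n) :
  is_symm Nt -> is_symm N1 -> is_symm N2 ->
  spec_norm_le1 Nt -> spec_norm_le1 N1 -> spec_norm_le1 N2 ->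
  psd N1 -> N1 *m N2 = N2 *m N1 -> 0 <= eps ->
  approx_eps eps (1%:M - Nt) (1%:M - N1) ->
  approx_eps eps (1%:M - 2^-1 *: (Nt *m N2 + N2 *m Nt)) (1%:M - N2 *m N1).
Proof.
move=> sT s1 s2 _ _ nN2 p1 _ he hap v.
set y := N2 *m v.
have eL : qform (1%:M - 2^-1 *: (Nt *m N2 + N2 *m Nt)) v
          = dot v v - dot v (Nt *m y).
  rewrite qform1B qformE -scalemxAl mulmxDl dotZr dotDr -!mulmxA.
  rewrite (dotM _ v _ s2) -/y (dotM _ y _ sT) (dotC _ v).
  by field; rewrite ?pnatr_eq0.
have eR : qform (1%:M - N2 *m N1) v = dot v v - dot v (N1 *m y).
  rewrite qform1B qformE -mulmxA (dotM _ v _ s2) -/y (dotM _ y _ s1).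
  by rewrite (dotC _ v).
have pT := polar _ v y sT; have pN := polar _ v y s1.
have [a1 a2] := hap (v + y); have [b1 b2] := hap (v - y).
rewrite !qform1B !qformE in a1 a2 b1 b2.
have ps := p1 (v - y); rewrite qformE in ps.
have ny : dot y y <= dot v v := nN2 v.
have e1 : dot (v + y) (v + y) = dot v v + 2 * dot v y + dot y y.
  by rewrite dotDl !dotDr (dotC y v); ring.
have e2 : dot (v - y) (v - y) = dot v v - 2 * dot v y + dot y y.
  by rewrite dotBl !dotBr (dotC y v); ring.
rewrite e1 in a1 a2; rewrite e2 in b1 b2.
rewrite eL eR.
have hk : 0 <= eps * (dot v v - dot y y + dot (v - y) (N1 *m (v - y))).
  apply: mulr_ge0 => //; lra.
move: a1 a2 b1 b2 pT pN hk.
set uu := dot (v + y) (Nt *m (v + y)).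
set ww := dot (v - y) (Nt *m (v - y)).
set ru := dot (v + y) (N1 *m (v + y)).
set rw := dot (v - y) (N1 *m (v - y)).
set a := dot v (Nt *m y). set b := dot v (N1 *m y).
set vv := dot v v. set vy := dot v y. set yy := dot y y.
move=> a1 a2 b1 b2 pT pN hk.
split; nra.
Qed.
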